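(* In the contention game with $k=2$ channels and $n\ge2$ players, if all players use the protocol $f^2$ (in every slot, regardless of history, a pending player transmits on each of the two channels with probability $1/2$ and never stays idle), then the expected latency of any player is $2^n/n$.
   Context: Contention game: $n$ players, channels $K=\{1,\dots,k\}$, slots $t=1,2,\dots$; each player has one packet and is initially pending. In each slot a pending player chooses an action in $\{0,1,\dots,k\}$ ($0$ = idle, $a$ = transmit on channel $a$). A lone transmitter on a channel succeeds and leaves the game; two or more transmitters on the same channel collide and remain pending. The latency of a player is the slot in which she transmits successfully. *)

(* Defs.v *)
From mathcomp Require Import all_boot.
From Stdlib Require Import Reals.
Set Implicit Arguments. Unset Strict Implicit. Unset Printing Implicit Defensive.

(* Channels K = {1,2} are represented by 'I_2.  Under protocol f^2 every
   pending player, in every slot and independently of history, picks one of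
   the two channels uniformly at random (never idle).  A slot's random
   outcome is thus a profile assigning a channel to each player; since
   choices are i.i.d. uniform, profiles are uniform on {ffun 'I_n -> 'I_2}
   (choices of already-departed players are irrelevant). *)
Definition profile (n : nat) := {ffun 'I_n -> 'I_2}.

Definition lone n (P : {set 'I_n}) (c : profile n) (i : 'I_n) : bool :=
  (i \in P) && [forall j in P, (j != i) ==> (c j != c i)].

Definition step n (P : {set 'I_n}) (c : profile n) : {set 'I_n} :=
  [set j in P | ~~ lone P c j].

Definition pending n (s : seq (profile n)) : {set 'I_n} :=
  foldl (@step n) [set: 'I_n] s.

(* latency of player i equals t.+1, for an outcome w of the first t.+1 slots *)
Definition latency_is n (i : 'I_n) t (w : (t.+1).-tuple (profile n)) : bool :=
  lone (pending (take t w)) (tnth w ord_max) i.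

Definition prob_latency n (i : 'I_n) (t : nat) : R :=
  (INR #|[set w : (t.+1).-tuple (profile n) | latency_is i w]|
   / INR #|{: (t.+1).-tuple (profile n)}|)%R.

(* Main.v *)
Require Import Defs.
From mathcomp Require Import all_boot.
From Stdlib Require Import Reals.
From Stdlib Require Import Lra.
From mathcomp Require Import zify.
Set Implicit Arguments. Unset Strict Implicit. Unset Printing Implicit Defensive.

Section RealPart.
Local Open Scope R_scope.


Lemma CV_const (c : R) : Un_cv (fun _ => c) c.
Proof. intros e He. exists 0%nat. intros. unfold Rdist. rewrite Rminus_diag Rabs_R0. lra. Qed.

Lemma isum_plus u v a b : infinite_sum u a -> infinite_sum v b ->
  infinite_sum (fun t => u t + v t) (a + b).
Proof.
intros Hu Hv. unfold infinite_sum in *.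
apply (Un_cv_ext (fun N => sum_f_R0 u N + sum_f_R0 v N)).
- intro N. now rewrite plus_sum.
- now apply CV_plus.
Qed.

Lemma isum_scal u a c : infinite_sum u a ->
  infinite_sum (fun t => c * u t) (c * a).
Proof.
intros Hu.
apply (Un_cv_ext (fun N => c * sum_f_R0 u N)).
- intro N. rewrite scal_sum. apply sum_eq. intros; ring.
- apply CV_mult; [apply CV_const|exact Hu].
Qed.

Lemma isum_ext u v a : (forall t, u t = v t) -> infinite_sum u a -> infinite_sum v a.
Proof.
intros H Hu. apply (Un_cv_ext (fun N => sum_f_R0 u N)); [|exact Hu].
intro N. apply sum_eq. auto.
Qed.

Lemma isum_zero : infinite_sum (fun _ => 0) 0.
Proof.
apply (Un_cv_ext (fun _ => 0)).
- intro N. induction N; simpl; lra.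
- apply CV_const.
Qed.

Lemma keyL (u v : nat -> R) (q V : R) :
  (forall t, 0 <= u t) -> (forall t, 0 <= v t) -> 0 <= q < 1 ->
  (forall t, u (S t) = q * u t + v t) ->
  infinite_sum v V -> infinite_sum u ((u 0%nat + V) / (1 - q)).
Proof.
intros Hu Hv Hq Hrec HV.
set (Sm := fun N => sum_f_R0 u N).
set (W := fun N => sum_f_R0 v N).
assert (HS : forall N, Sm (S N) = u 0%nat + q * Sm N + W N).
{ intro N; induction N.
  - unfold Sm, W; simpl. rewrite Hrec. ring.
  - unfold Sm, W in *. rewrite !tech5 in IHN *. rewrite (Hrec (S N)). rewrite {1}IHN. ring. }
assert (HW : forall N, W N <= V).
{ apply growing_ineq; [|exact HV]. intro N. unfold W. rewrite tech5. specialize (Hv (S N)). lra. }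
assert (Hg : Un_growing Sm).
{ intro N. unfold Sm. rewrite tech5. specialize (Hu (S N)). lra. }
assert (Hb : forall N, Sm N <= (u 0%nat + V) / (1 - q)).
{ intro N. apply Rmult_le_reg_r with (1 - q); [lra|].
  unfold Rdiv. rewrite Rmult_assoc Rinv_l; last lra. rewrite Rmult_1_r.
  destruct N.
  - unfold Sm; simpl. assert (0 <= V) by (specialize (HW 0%nat); unfold W in HW; simpl in HW; specialize (Hv 0%nat); lra).
    assert (0 <= q * u 0%nat) by (apply Rmult_le_pos; [lra|apply Hu]). nra.
  - rewrite HS. specialize (HW N). specialize (Hg N). rewrite HS in Hg.
    assert (0 <= Sm N) by (unfold Sm; clear -Hu; induction N; simpl; [apply Hu|specialize (Hu (S N)); lra]).
    nra. }
destruct (growing_cv Sm Hg) as [l Hl].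
{ exists ((u 0%nat + V) / (1 - q)). intros x [N ->]. apply Hb. }
assert (Hl2 : Un_cv (fun N => Sm (S N)) (u 0%nat + q * l + V)).
{ apply (Un_cv_ext (fun N => (u 0%nat + q * Sm N) + W N)).
  - intro N. now rewrite HS.
  - apply CV_plus; [|exact HV]. apply CV_plus; [apply CV_const|].
    apply CV_mult; [apply CV_const|exact Hl]. }
assert (Hl3 : Un_cv (fun N => Sm (S N)) l).
{ apply (Un_cv_ext (fun N => Sm (N + 1)%nat)).
  - intro N. f_equal. lia.
  - apply CV_shift'. exact Hl. }
pose proof (UL_sequence _ _ _ Hl2 Hl3) as E.
replace ((u 0%nat + V) / (1 - q)) with l. exact Hl.
field_simplify_eq; [lra|lra].
Qed.

End RealPart.

Section Main.
Local Notation "a ^ b" := (expn a b) : nat_scope.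


Lemma I2 (x y z : 'I_2) : x != y -> y != z -> x != z -> False.
Proof. by case: x => [[|[|?]] ?]; case: y => [[|[|?]] ?]; case: z => [[|[|?]] ?]. Qed.

Lemma card_sum (T : finType) (A : pred T) : #|A| = \sum_(x : T) (x \in A : nat).
Proof. by rewrite -sum1_card big_mkcond; apply: eq_bigr => x _; case: (x \in A). Qed.

Lemma sum_tupleS (T : finType) t (F : (t.+1).-tuple T -> nat) :
  \sum_(w : (t.+1).-tuple T) F w = \sum_(c : T) \sum_(w : t.-tuple T) F (cons_tuple c w).
Proof.
rewrite pair_big /=.
rewrite (reindex (fun p : T * t.-tuple T => cons_tuple p.1 p.2)) //=.
exists (fun w : (t.+1).-tuple T => (thead w, behead_tuple w)) => [[c w] _|w _] /=.
  by congr pair; apply: val_inj.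
by rewrite [in RHS](tuple_eta w); apply: val_inj.
Qed.

Lemma sum_tuple0 (T : finType) (F : 0.-tuple T -> nat) :
  \sum_(w : 0.-tuple T) F w = F [tuple].
Proof.
rewrite (eq_bigr (fun _ => F [tuple])) => [|w _]; last by rewrite tuple0.
by rewrite sum_nat_const card_tuple expn0 mul1n.
Qed.

Definition cnt n (i : 'I_n) (S : {set 'I_n}) t : nat :=
  \sum_(w : (t.+1).-tuple (profile n)) lone (foldl (@step n) S (take t w)) (tnth w ord_max) i.

Lemma cnt0 n (i : 'I_n) (S : {set 'I_n}) : cnt i S 0 = #|[set c : profile n | lone S c i]|.
Proof.
rewrite /cnt sum_tupleS card_sum; apply: eq_bigr => c _.
by rewrite sum_tuple0 inE.
Qed.

Lemma cntS n (i : 'I_n) (S : {set 'I_n}) t : cnt i S t.+1 = \sum_(c : profile n) cnt i (step S c) t.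
Proof.
rewrite /cnt sum_tupleS; apply: eq_bigr => c _; apply: eq_bigr => w _.
congr (nat_of_bool (lone _ _ _)).
rewrite (tnth_nth c) /= (tnth_nth c) /=.
done.
Qed.

Lemma foldl_step_sub n (S : {set 'I_n}) s : foldl (@step n) S s \subset S.
Proof.
elim: s S => [|c s IH] S /=; first exact: subxx.
apply: subset_trans (IH _) _.
by apply/subsetP => x; rewrite inE => /andP[].
Qed.

Lemma cnt_out n (i : 'I_n) (S : {set 'I_n}) t : i \notin S -> cnt i S t = 0.
Proof.
move=> iS; rewrite /cnt big1 // => w _.
rewrite /lone.
case H: (i \in _) => //=.
by move: (subsetP (foldl_step_sub S (take t w)) i H); rewrite (negbTE iS).
Qed.

Lemma card_profile n : #|{: profile n}| = 2 ^ n.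
Proof. by rewrite card_ffun !card_ord. Qed.

Lemma card_lone n (S : {set 'I_n}) j : j \in S ->
  #|[set c : profile n | lone S c j]| = 2 * 2 ^ (n - #|S|).
Proof.
move=> jS.
pose F (b : 'I_2) (x : 'I_n) := [pred y : 'I_2 | if x == j then y == b else if x \in S then y != b else true].
have E : forall c : profile n, (c \in [set c | lone S c j] : nat) = \sum_(b : 'I_2) (c \in finfun.family (F b) : nat).
  move=> c; rewrite (bigD1 (c j)) //= big1 ?addn0.
    congr nat_of_bool; rewrite inE; apply/idP/familyP.
      case/andP=> _ /forallP H x; rewrite inE.
      case: eqP => [->//|/eqP xj]; case xS: (x \in S) => //.
      by have := H x; rewrite xS xj.
    move=> H; rewrite /lone jS /=; apply/forallP => x; apply/implyP => xS; apply/implyP => xj.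
    by have := H x; rewrite inE (negbTE xj) xS.
  move=> b bc; apply/eqP; rewrite eqb0; apply/familyP => H.
  by have := H j; rewrite inE eqxx eq_sym (negbTE bc).
rewrite card_sum (eq_bigr _ (fun c _ => E c)) exchange_big /=.
have Hb : forall b, \sum_(c : profile n) (c \in finfun.family (F b) : nat) = 2 ^ (n - #|S|).
  move=> b; rewrite -card_sum card_family foldrE big_map big_enum /=.
  rewrite (eq_bigr (fun x => if x \in ~: S then 2 else 1)); last first.
    move=> x _; rewrite inE.
    case: eqP => [->|/eqP xj].
      rewrite jS /=.
      by apply: etrans (card1 b); apply: eq_card => y; rewrite !inE.
    case xS: (x \in S) => /=.
      apply: etrans (_ : _ = #|predC1 b|) _; last by rewrite cardC1 card_ord.
      by apply: eq_card => y; rewrite !inE.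
    apply: etrans (_ : _ = #|predT : pred 'I_2|) _; last by rewrite cardT size_enum_ord.
    by apply: eq_card => y; rewrite !inE.
  rewrite -big_mkcond prod_nat_const; congr (_ ^ _).
  by have := cardsC S; rewrite card_ord; move/(f_equal (subn^~ #|S|)); rewrite addKn.
rewrite (eq_bigr _ (fun b _ => Hb b)) sum_nat_const card_ord.
by [].
Qed.

Lemma uniq_lone n (S : {set 'I_n}) (c : profile n) j k :
  3 <= #|S| -> lone S c j -> lone S c k -> j = k.
Proof.
move=> S3 /andP[jS /forallP Hj] /andP[kS /forallP Hk].
apply/eqP/negPn/negP => jk.
have : 0 < #|(S :\ j) :\ k|.
  have := cardsD1 j S; have := cardsD1 k (S :\ j).
  rewrite jS !inE kS eq_sym jk /= => E1 E2; by move: S3; rewrite E2 E1 !add1n !ltnS.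
case/card_gt0P => l; rewrite !inE => /and3P[lk lj lS].
apply: (@I2 (c l) (c j) (c k)).
- by have := Hj l; rewrite lS lj.
- by have := Hk j; rewrite jS jk.
- by have := Hk l; rewrite lS lk.
Qed.

Lemma step_point n (S : {set 'I_n}) (c : profile n) (F : {set 'I_n} -> nat) :
  3 <= #|S| ->
  F (step S c) = (~~ [exists j in S, lone S c j]) * F S
                 + \sum_(j in S) lone S c j * F (S :\ j).
Proof.
move=> S3.
case: (boolP [exists j in S, lone S c j]) => [/existsP[j /andP[jS lj]] | H].
  rewrite mul0n add0n (bigD1 j) //= lj mul1n big1 ?addn0.
    congr F; apply/setP => k; rewrite !inE.
    case: (k =P j) => [->|/eqP kj]; first by rewrite lj andbF.
    case kS: (k \in S) => //=.
    apply/negP => lk; move/eqP: kj; apply; exact: uniq_lone S3 lk lj.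
  move=> k /andP[kS kj].
  case lk: (lone S c k) => //.
  by move/eqP: kj; case; exact: uniq_lone S3 lk lj.
rewrite mul1n big1 ?addn0.
  congr F; apply/setP => k; rewrite !inE.
  case kS: (k \in S) => //=.
  apply/negP => lk; move/negP: H; apply; apply/existsP; exists k; by rewrite kS.
move=> k kS.
case lk: (lone S c k) => //.
by move/negP: H; case; apply/existsP; exists k; rewrite kS.
Qed.

Lemma sum_lone n (S : {set 'I_n}) j : j \in S ->
  \sum_(c : profile n) (lone S c j : nat) = 2 * 2 ^ (n - #|S|).
Proof.
move=> jS; rewrite -(card_lone jS) card_sum; apply: eq_bigr => c _; by rewrite inE.
Qed.

Lemma sum_step3 n (S : {set 'I_n}) (F : {set 'I_n} -> nat) : 3 <= #|S| ->
  \sum_(c : profile n) F (step S c) =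
  (2 ^ n - #|S| * (2 * 2 ^ (n - #|S|))) * F S
  + \sum_(j in S) (2 * 2 ^ (n - #|S|)) * F (S :\ j).
Proof.
move=> S3.
have Hsum : forall G : {set 'I_n} -> nat, \sum_(c : profile n) G (step S c) =
   (\sum_(c : profile n) (~~ [exists j in S, lone S c j] : nat)) * G S
   + \sum_(j in S) (2 * 2 ^ (n - #|S|)) * G (S :\ j).
  move=> G.
  rewrite (eq_bigr _ (fun c _ => step_point c G S3)) big_split /= -big_distrl /=.
  congr (_ + _); rewrite exchange_big /=; apply: eq_bigr => j jS.
  by rewrite -big_distrl /= sum_lone.
have H1 := Hsum (fun _ => 1).
rewrite /= sum1_card card_profile !muln1 in H1.
rewrite Hsum; congr (_ * _ + _).
move: H1; rewrite (eq_bigr (fun _ => 2 * 2 ^ (n - #|S|))) => [|j _]; last by [].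
rewrite sum_nat_const.
move: (\sum_(c : profile n) _) => x; by move=> ->; rewrite addnK.
Qed.

Fixpoint G n m t : nat :=
  if t is t'.+1 then
    (if m <= 2 then (2 ^ n - 2 * 2 ^ (n - m)) * G n m t'
     else (2 ^ n - m * (2 * 2 ^ (n - m))) * G n m t' + m.-1 * (2 * 2 ^ (n - m)) * G n m.-1 t')
  else 2 * 2 ^ (n - m).

Lemma sum_notlone n (S : {set 'I_n}) i : i \in S ->
  \sum_(c : profile n) (~~ lone S c i : nat) = 2 ^ n - 2 * 2 ^ (n - #|S|).
Proof.
move=> iS.
have H : \sum_(c : profile n) ((lone S c i : nat) + (~~ lone S c i : nat)) = 2 ^ n.
  rewrite -card_profile -sum1_card; apply: eq_bigr => c _; by case: (lone S c i).
by rewrite big_split /= sum_lone // in H; rewrite -H addKn.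
Qed.

Lemma cnt_val n (i : 'I_n) t : forall S : {set 'I_n}, i \in S -> 2 <= #|S| ->
  cnt i S t = G n #|S| t.
Proof.
elim: t => [|t IH] S iS S2.
  by rewrite cnt0 card_lone.
rewrite cntS /=.
case: (ltnP 2 #|S|) => [S3 | S2'].
  rewrite (sum_step3 (fun P => cnt i P t)) //.
  congr (_ + _); first by rewrite IH.
  rewrite (bigD1 i) //= cnt_out ?muln0 ?add0n; last by rewrite !inE eqxx.
  have HS := cardsD1 i S; rewrite iS in HS.
  rewrite (eq_bigr (fun _ => 2 * 2 ^ (n - #|S|) * G n #|S|.-1 t)); last first.
    move=> j /andP[jS ji]; rewrite IH.
    - by congr (_ * G n _ t); have := cardsD1 j S; rewrite jS HS => ->.
    - by rewrite !inE eq_sym ji.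
    - by have := cardsD1 j S; rewrite jS => E; move: S3; rewrite E add1n ltnS.
  rewrite sum_nat_const mulnA; congr (_ * _ * _).
  rewrite HS /=; apply: eq_card => j; rewrite !inE andbC.
  done.
have S2e : #|S| = 2 by apply/eqP; rewrite eqn_leq S2' S2.
have [j Sij] : exists j, S :\ i = [set j].
  by apply/cards1P; have := cardsD1 i S; rewrite iS S2e add1n => -[<-].
have inS : forall k, k \in S -> k = i \/ k = j.
  move=> k kS; case: (k =P i) => [->|/eqP ki]; [by left | right].
  have : k \in S :\ i by rewrite !inE ki kS.
  by rewrite Sij inE => /eqP.
have jS : j \in S.
  have : j \in S :\ i by rewrite Sij inE.
  by rewrite inE => /andP[? ?].
have ji : j != i.
  have : j \in S :\ i by rewrite Sij inE.
  by rewrite !inE => /andP[? ?].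
have loneE : forall (c : profile n) k, k \in S -> lone S c k = (c j != c i).
  move=> c k kS; rewrite /lone kS /=.
  case: (inS k kS) => ->.
    apply/forallP/idP => [H|H l].
      by have := H j; rewrite jS ji.
    apply/implyP => lS; apply/implyP => li.
    by case: (inS l lS) => E; [rewrite E eqxx in li | rewrite E].
  apply/forallP/idP => [H|H l].
    by have := H i; rewrite iS eq_sym ji eq_sym.
  apply/implyP => lS; apply/implyP => lj.
  by case: (inS l lS) => E; [rewrite E eq_sym | rewrite E eqxx in lj].
rewrite S2e.
rewrite (eq_bigr (fun c : profile n => (~~ lone S c i : nat) * G n 2 t)); last first.
  move=> c _.
  have -> : step S c = if lone S c i then set0 else S.
    apply/setP => k; rewrite !inE.
    case kS: (k \in S); last by case: (lone S c i); rewrite ?inE.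
    by rewrite (loneE c k kS) (loneE c i iS); case: (c j != c i); rewrite ?inE.
  case: (lone S c i) => /=.
    by rewrite cnt_out // inE.
  by rewrite IH // S2e mul1n.
by rewrite -big_distrl /= sum_notlone // S2e.
Qed.

Lemma INR_mul a b : INR (a * b)%nat = (INR a * INR b)%R.
Proof. by rewrite mulnE mult_INR. Qed.
Lemma INR_add a b : INR (a + b)%nat = (INR a + INR b)%R.
Proof. by rewrite addnE plus_INR. Qed.
Lemma INR_sub a b : (b <= a)%nat -> INR (a - b)%nat = (INR a - INR b)%R.
Proof. by move=> /leP H; rewrite -minus_INR. Qed.
Lemma INR_exp2 k : INR (2 ^ k)%nat = (2 ^ k)%R.
Proof.
elim: k => [|k IH]; first by rewrite expn0 /=.
by rewrite expnS INR_mul IH /=.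
Qed.
Lemma INR_pos k : (0 < k)%nat -> (0 < INR k)%R.
Proof. by move=> /ltP; apply: lt_0_INR. Qed.

Lemma twom_le m : (2 * m <= 2 ^ m)%nat.
Proof.
elim: m => [//|m IH]. rewrite expnS. have := expn_gt0 2 m. lia.
Qed.

Definition gR n m t : R := (INR (G n m t) / INR ((2 ^ n) ^ t.+1)%nat)%R.

Lemma gR_ge0 n m t : (0 <= gR n m t)%R.
Proof.
rewrite /gR; apply: Rmult_le_pos; first exact: pos_INR.
apply/Rlt_le/Rinv_0_lt_compat/INR_pos; by rewrite !expn_gt0.
Qed.

Lemma pow_split n m : (m <= n)%nat -> (2 ^ n = 2 ^ m * 2 ^ (n - m))%nat.
Proof. by move=> mn; rewrite -expnD subnKC. Qed.

Lemma gR0 n m : (m <= n)%nat -> gR n m 0 = (2 / INR (2 ^ m)%nat)%R.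
Proof.
move=> mn; rewrite /gR /= expn1 INR_mul (pow_split mn) INR_mul.
have h1 : INR (2 ^ m)%nat <> 0%R by apply/not_0_INR/eqP; rewrite -lt0n expn_gt0.
have h2 : INR (2 ^ (n - m))%nat <> 0%R by apply/not_0_INR/eqP; rewrite -lt0n expn_gt0.
simpl INR. field. by split.
Qed.

Lemma INR2 : INR 2 = 2%R.
Proof. by rewrite /=; ring. Qed.

Lemma gR_rec3 n m t : (3 <= m)%nat -> (m <= n)%nat ->
  gR n m t.+1 = ((1 - 2 * INR m / INR (2 ^ m)%nat) * gR n m t
                + (2 * INR m.-1 / INR (2 ^ m)%nat) * gR n m.-1 t)%R.
Proof.
move=> m3 mn; rewrite /gR.
have -> : G n m t.+1 = ((2 ^ n - m * (2 * 2 ^ (n - m))) * G n m t + m.-1 * (2 * 2 ^ (n - m)) * G n m.-1 t)%nat.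
  by rewrite [LHS]/= ifF //; apply/negbTE; rewrite -ltnNge.
have le1 : (m * (2 * 2 ^ (n - m)) <= 2 ^ n)%nat.
  by rewrite (pow_split mn) mulnA leq_mul2r (mulnC m) twom_le orbT.
rewrite (expnS (2 ^ n) t.+1) INR_mul.
have h3 : INR ((2 ^ n) ^ t.+1)%nat <> 0%R by apply/not_0_INR/eqP; rewrite -lt0n !expn_gt0.
move: h3; set X := INR ((2 ^ n) ^ t.+1)%nat => h3.
rewrite INR_add !INR_mul (INR_sub le1) !INR_mul (pow_split mn) !INR_mul INR2.
have h1 : INR (2 ^ m)%nat <> 0%R by apply/not_0_INR/eqP; rewrite -lt0n expn_gt0.
have h2 : INR (2 ^ (n - m))%nat <> 0%R by apply/not_0_INR/eqP; rewrite -lt0n expn_gt0.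
field. by split.
Qed.

Lemma gR_rec2 n t : (2 <= n)%nat -> gR n 2 t.+1 = (/ 2 * gR n 2 t)%R.
Proof.
move=> n2; rewrite /gR.
have -> : G n 2 t.+1 = ((2 ^ n - 2 * 2 ^ (n - 2)) * G n 2 t)%nat by [].
have le1 : (2 * 2 ^ (n - 2) <= 2 ^ n)%nat by rewrite (pow_split n2) leq_mul2r orbT.
rewrite (expnS (2 ^ n) t.+1) !INR_mul (INR_sub le1) !INR_mul (pow_split n2) !INR_mul INR2.
have h3 : INR ((2 ^ 2 * 2 ^ (n - 2)) ^ t.+1)%nat <> 0%R by apply/not_0_INR/eqP; rewrite -lt0n expn_gt0 muln_gt0 !expn_gt0.
have h2 : INR (2 ^ (n - 2))%nat <> 0%R by apply/not_0_INR/eqP; rewrite -lt0n expn_gt0.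
field. by [].
Qed.

Lemma claim n m : (2 <= m)%nat -> (m <= n)%nat ->
  infinite_sum (gR n m) 1%R /\
  infinite_sum (fun t => (INR t.+1 * gR n m t)%R) (INR (2 ^ m)%nat / INR m)%R.
Proof.
elim: m => [//|m IH] m2 mn.
case: (ltnP 2 m.+1) => [m3|m2'].
  have [IH1 IH2] := IH m3 (ltnW mn).
  set P := INR (2 ^ m.+1)%nat.
  set M := INR m.+1.
  have HP : (0 < P)%R by apply: INR_pos; rewrite expn_gt0.
  have HM : (0 < M)%R by apply: INR_pos.
  have HPM : (2 * M <= P)%R.
    have := le_INR _ _ (elimT leP (twom_le m.+1)); rewrite INR_mul -/P -/M /=; lra.
  have HM1 : INR m = (M - 1)%R by rewrite /M S_INR; ring.
  have HM1p : (0 < INR m)%R by apply: INR_pos; lia.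
  have HP1 : P = (2 * INR (2 ^ m)%nat)%R by rewrite /P expnS INR_mul.
  set q := (1 - 2 * M / P)%R.
  set r := (2 * INR m / P)%R.
  have Hq : (0 <= q < 1)%R.
    rewrite /q; split.
      have : (2 * M / P <= 1)%R.
        rewrite -[X in (_ <= X)%R](Rinv_r P); last by lra.
        unfold Rdiv; apply: Rmult_le_compat_r; [left; apply: Rinv_0_lt_compat|]; lra.
      lra.
    have : (0 < 2 * M / P)%R by apply: Rdiv_lt_0_compat; lra.
    lra.
  have Hr : (0 <= r)%R by apply: Rle_mult_inv_pos; lra.
  have Hrec : forall t, gR n m.+1 t.+1 = (q * gR n m.+1 t + r * gR n m t)%R.
    by move=> t; rewrite gR_rec3.
  have E0 : gR n m.+1 0 = (2 / P)%R by rewrite gR0.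
  have A1 : infinite_sum (gR n m.+1) 1%R.
    have K := keyL (u := gR n m.+1) (v := (fun t => r * gR n m t)%R)
      (fun t => @gR_ge0 _ _ _) (fun t => Rmult_le_pos _ _ Hr (@gR_ge0 _ _ _)) Hq Hrec
      (isum_scal r IH1).
    move: K; rewrite E0. congr infinite_sum. rewrite /q /r HM1. field. lra.
  split; first exact: A1.
  have K := keyL (u := (fun t => INR t.+1 * gR n m.+1 t)%R)
     (v := (fun t => q * gR n m.+1 t + r * (INR t.+1 * gR n m t) + r * gR n m t)%R).
  have K' := K _ _ (fun t => Rmult_le_pos _ _ (pos_INR _) (@gR_ge0 _ _ _)).
  clear K.
  have Hv : forall t, (0 <= q * gR n m.+1 t + r * (INR t.+1 * gR n m t) + r * gR n m t)%R.
    move=> t. have := gR_ge0 n m.+1 t; have := gR_ge0 n m t; have := pos_INR t.+1.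
    move=> a b c. have := Rmult_le_pos _ _ a b. move=> d.
    have := Rmult_le_pos _ _ (proj1 Hq) c; have := Rmult_le_pos _ _ Hr d; have := Rmult_le_pos _ _ Hr b.
    lra.
  have K2 := K' _ _ Hv Hq.
  clear K'.
  have Hrec2 : forall t, (INR t.+2 * gR n m.+1 t.+1 =
      q * (INR t.+1 * gR n m.+1 t) + (q * gR n m.+1 t + r * (INR t.+1 * gR n m t) + r * gR n m t))%R.
    move=> t; rewrite Hrec (S_INR t.+1); ring.
  have := K2 _ Hrec2 (isum_plus (isum_plus (isum_scal q A1) (isum_scal r IH2)) (isum_scal r IH1)).
  rewrite E0. congr infinite_sum.
  rewrite /q /r.
  have I1 : INR 1 = 1%R by [].
  have HQ : (0 < INR (2 ^ m)%nat)%R by apply: INR_pos; rewrite expn_gt0.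
  rewrite I1 HP1. rewrite HM1. field. rewrite HM1 in HM1p. split; [lra|split; lra].
have n2 : (2 <= n)%nat by exact: leq_trans m2 mn.
have -> : m.+1 = 2 by apply/eqP; rewrite eqn_leq m2' m2.
have E0 : gR n 2 0 = (/ 2)%R by rewrite gR0 //=; field.
have Hq : (0 <= / 2 < 1)%R by lra.
have A : infinite_sum (gR n 2) 1%R.
  have K := keyL (u := gR n 2) (v := fun _ => 0%R)
    (fun t => @gR_ge0 _ _ _) (fun t => Rle_refl _) Hq
    (fun t => ltac:(rewrite gR_rec2 //; ring)) isum_zero.
  move: K; rewrite E0; congr infinite_sum; field.
split; first exact: A.
have K := keyL (u := (fun t => INR t.+1 * gR n 2 t)%R) (v := (fun t => / 2 * gR n 2 t)%R)
    (fun t => Rmult_le_pos _ _ (pos_INR _) (@gR_ge0 _ _ _))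
    (fun t => Rmult_le_pos _ _ (Rlt_le _ _ (Rinv_0_lt_compat _ Rlt_0_2)) (@gR_ge0 _ _ _)) Hq.
have Hrec2 : forall t, (INR t.+2 * gR n 2 t.+1 = / 2 * (INR t.+1 * gR n 2 t) + / 2 * gR n 2 t)%R.
  move=> t; rewrite gR_rec2 // (S_INR t.+1); ring.
move: (K _ Hrec2 (isum_scal (/ 2) A)) => {K}.
rewrite E0; congr infinite_sum. simpl. field.
Qed.

Lemma prob_eq n (i : 'I_n) t : (2 <= n)%nat -> prob_latency i t = gR n n t.
Proof.
move=> hn; rewrite /prob_latency /gR.
have -> : #|[set w : (t.+1).-tuple (profile n) | latency_is i w]| = G n n t.
  have := @cnt_val n i t [set: 'I_n] (in_setT i).
  rewrite cardsT card_ord => <- //.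
  by rewrite card_sum; apply: eq_bigr => w _; rewrite inE.
by rewrite card_tuple card_profile.
Qed.

End Main.

Theorem lemma3 (n : nat) (hn : (2 <= n)%N) (i : 'I_n) :
  infinite_sum (fun t => prob_latency i t) 1%R /\
  infinite_sum (fun t => (INR t.+1 * prob_latency i t)%R) (2 ^ n / INR n)%R.
Proof.
have [A B] := claim hn (leqnn n).
split.
  by apply: isum_ext A => t; rewrite prob_eq.
rewrite -INR_exp2.
by apply: isum_ext B => t; rewrite prob_eq.
Qed.
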